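(* Let $A=S_{\mathbf q}(V)$ and let $K_\bullet$ be its Koszul bimodule resolution (defined in the context). Define left $A$-module maps $t_{-1}\colon A\to A\otimes A$ by $t_{-1}(1)=1\otimes 1$ and, for $p\ge 0$, $t_p\colon K_p\to K_{p+1}$ on the left $A$-basis elements $1\otimes(x_{j_1}\wedge\cdots\wedge x_{j_p})\otimes\underline{x}^{\underline{\ell}}$ ($1\le j_1<\cdots<j_p\le N$, $\underline{\ell}\in\mathbb{N}^N$) by $$t_p\big(1\otimes(x_{j_1}\wedge\cdots\wedge x_{j_p})\otimes\underline{x}^{\underline{\ell}}\big)=(-1)^{p+1}\sum_{j_{p+1}=j_p+1}^{N}\sum_{r=1}^{\ell_{j_{p+1}}}\lambda^{(\underline{\ell};j_1,\dots,j_p)}_{j_{p+1},r}\ x_{j_{p+1}}^{\ell_{j_{p+1}}-r}x_{j_{p+1}+1}^{\ell_{j_{p+1}+1}}\cdots x_N^{\ell_N}\otimes(x_{j_1}\wedge\cdots\wedge x_{j_{p+1}})\otimes x_1^{\ell_1}\cdots x_{j_{p+1}-1}^{\ell_{j_{p+1}-1}}x_{j_{p+1}}^{r-1},$$ where (writing $m=j_{p+1}$) $$\lambda^{(\underline{\ell};j_1,\dots,j_p)}_{m,r}=\Big(\prod_{s=1}^{m-1}\prod_{t=m}^{N}q_{s,t}^{\ell_s\ell_t}\Big)\Big(\prod_{t=1}^Nq_{m,t}^{\ell_t}\Big)^{r-1}\Big(\prod_{t=1}^pq_{j_t,m}^{\ell_m-r}\Big)\Big(\prod_{s=1}^{p+1}\prod_{t=m+1}^Nq_{j_s,t}^{\ell_t}\Big),$$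 with the convention $j_0=0$ when $p=0$, and extended left $A$-linearly. Then $d_0t_{-1}=\mathrm{Id}_A$ and $t_{p-1}d_p+d_{p+1}t_p=\mathrm{Id}_{K_p}$ for all $p\ge0$, i.e. $(t_p)_{p\ge-1}$ is a chain contraction of $K_\bullet$.
   Context: $\mathbb{k}$ is a field, $N\ge1$, and $\mathbf q=(q_{i,j})_{1\le i,j\le N}$ are nonzero scalars in $\mathbb{k}$ with $q_{i,i}=1$ and $q_{j,i}=q_{i,j}^{-1}$. $V$ has basis $x_1,\dots,x_N$, and $S_{\mathbf q}(V)=\mathbb{k}\langle x_1,\dots,x_N\mid x_ix_j=q_{i,j}x_jx_i\ \forall i,j\rangle$ is the quantum symmetric algebra; the ordered monomials $\underline{x}^{\underline{\ell}}=x_1^{\ell_1}\cdots x_N^{\ell_N}$, $\underline{\ell}\in\mathbb{N}^N$, form a $\mathbb{k}$-basis. The Koszul resolution $K_\bullet$ of $A=S_{\mathbf q}(V)$ has $K_p=A\otimes\bigwedge^p(V)\otimes A$ ($0\le p\le N$), the free $A$-bimodule with basis $1\otimes(x_{j_1}\wedge\cdots\wedge x_{j_p})\otimes1$, $1\le j_1<\cdots<j_p\le N$; $d_0$ is multiplication and for $p\ge1$ $$d_p(1\otimes(x_{j_1}\wedge\cdots\wedge x_{j_p})\otimes1)=\sum_{i=1}^p(-1)^{i+1}\Big(\prod_{s=1}^iq_{j_s,j_i}\Big)x_{j_i}\otimes(x_{j_1}\wedge\cdots\widehat{x_{j_i}}\cdots\wedge x_{j_p})\otimes1-\sum_{i=1}^p(-1)^{i+1}\Big(\prod_{s=i}^pq_{j_i,j_s}\Big)1\otimes(x_{j_1}\wedge\cdots\widehat{x_{j_i}}\cdots\wedge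 x_{j_p})\otimes x_{j_i},$$ where the hat denotes omission. *)

(* Defs.v *)
From HB Require Import structures.
From mathcomp Require Import all_boot all_order all_algebra.
Set Implicit Arguments. Unset Strict Implicit. Unset Printing Implicit Defensive.
Import Order.TTheory GRing.Theory.
Local Open Scope ring_scope.

(* Model:
   - variables x_1..x_N are indexed (0-based) by 'I_N;
   - an ordered monomial x^l is l : mono N = {ffun 'I_N -> nat};
   - a wedge x_{j_1}/\../\x_{j_p} with j_1<..<j_p is the set {j_1,..,j_p};
   - the k-basis of K_p = A (x) /\^p V (x) A consists of triples
     (a, J, b) standing for x^a (x) x_J (x) x^b with #|J| = p;
   - vectors are formal k-linear combinations (seq (k * basis)), compared
     through their coefficient functions [coef];
   - maps are given on basis elements and extended linearly by [lext]. *)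

Definition mono (N : nat) := {ffun 'I_N -> nat}.
Definition kbasis (N : nat) := (mono N * {set 'I_N} * mono N)%type.
Definition fsum (k : Type) (B : Type) := seq (k * B).

Definition coef (k : fieldType) (B : eqType) (v : fsum k B) (b : B) : k :=
  \sum_(x <- v | x.2 == b) x.1.

Definition lext (k : fieldType) (B C : Type) (f : B -> fsum k C) (v : fsum k B)
  : fsum k C :=
  flatten [seq [seq (x.1 * y.1, y.2) | y <- f x.2] | x <- v].

Definition mono0 (N : nat) : mono N := [ffun => 0%N].
Definition monoX (N : nat) (j : 'I_N) : mono N := [ffun i => ((i == j) : nat)].
Definition monoadd (N : nat) (a b : mono N) : mono N := [ffun i => (a i + b i)%N].

(* x^a * x^b = mcoef q a b * x^(a+b) in S_q(V), from x_s x_t = q_{s,t} x_t x_s *)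
Definition mcoef (k : fieldType) (N : nat) (q : 'I_N -> 'I_N -> k) (a b : mono N) : k :=
  \prod_(s : 'I_N) \prod_(t : 'I_N | (t < s)%N) q s t ^+ (a s * b t)%N.

Definition wlist (N : nat) (J : {set 'I_N}) : seq 'I_N := [seq j <- ord_enum N | j \in J].

(* d_p (p >= 1) on the k-basis element x^a (x) x_J (x) x^b (bimodule extension).
   For j = j_i (1-based position i), (-1)^(i+1) = (-1)^#{s in J | s < j}. *)
Definition dK (k : fieldType) (N : nat) (q : 'I_N -> 'I_N -> k) (x : kbasis N)
  : fsum k (kbasis N) :=
  let: (a, J, b) := x in
  flatten [seq
    let sg := (-1) ^+ #|[set s in J | (s < j)%N]| in
    let L := \prod_(s in J | (s <= j)%N) q s j in
    let R := \prod_(s in J | (j <= s)%N) q j s in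
    [:: (sg * L * mcoef q a (monoX j), (monoadd a (monoX j), J :\ j, b));
        (- (sg * R) * mcoef q (monoX j) b, (a, J :\ j, monoadd (monoX j) b))]
  | j : 'I_N <- wlist J].

(* d_0 : A (x) A -> A, multiplication (used on elements with J = set0) *)
Definition d0 (k : fieldType) (N : nat) (q : 'I_N -> 'I_N -> k) (x : kbasis N)
  : fsum k (mono N) :=
  let: (a, _, b) := x in [:: (mcoef q a b, monoadd a b)].

Definition tm1 (k : fieldType) (N : nat) (a : mono N) : fsum k (kbasis N) :=
  [:: (1, (a, set0, mono0 N))].

Definition lambda (k : fieldType) (N : nat) (q : 'I_N -> 'I_N -> k)
  (l : mono N) (J : {set 'I_N}) (m : 'I_N) (r : nat) : k :=
  (\prod_(s : 'I_N | (s < m)%N) \prod_(t : 'I_N | (m <= t)%N) q s t ^+ (l s * l t)%N)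
  * (\prod_(t : 'I_N) q m t ^+ l t) ^+ r.-1
  * (\prod_(j in J) q j m ^+ (l m - r)%N)
  * (\prod_(j in m |: J) \prod_(t : 'I_N | (m < t)%N) q j t ^+ l t).

(* t_p on x^a (x) x_J (x) x^l, left A-linear extension of the formula on
   1 (x) x_J (x) x^l; m = j_{p+1} ranges over indices larger than all of J
   (all indices when J is empty, i.e. the convention j_0 = 0). *)
Definition tK (k : fieldType) (N : nat) (q : 'I_N -> 'I_N -> k) (x : kbasis N)
  : fsum k (kbasis N) :=
  let: (a, J, l) := x in
  flatten [seq
    [seq let L : mono N := [ffun t : 'I_N => if (t < m)%N then 0%N
                              else if t == m then (l m - r)%N else l t] in
         let R : mono N := [ffun t : 'I_N => if (t < m)%N then l t
                              else if t == m then r.-1 else 0%N] in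
         ((-1) ^+ #|J|.+1 * lambda q l J m r * mcoef q a L,
          (monoadd a L, m |: J, R))
    | r <- iota 1 (l m)]
  | m : 'I_N <- [seq m : 'I_N <- ord_enum N | [forall j in J, (j < m)%N]]].

(* Main.v *)
Require Import Defs.
From HB Require Import structures.
From mathcomp Require Import all_boot all_order all_algebra.
From mathcomp Require Import zify ring lra.
Set Implicit Arguments. Unset Strict Implicit. Unset Printing Implicit Defensive.
Import GRing.Theory.
Local Open Scope ring_scope.


Definition lin (k : fieldType) (B : Type) (F : B -> k) (w : fsum k B) : k :=
  \sum_(y <- w) y.1 * F y.2.

Lemma lin_cat (k : fieldType) (B : Type) (F : B -> k) (v w : fsum k B) :
  lin F (v ++ w) = lin F v + lin F w.
Proof. by rewrite /lin big_cat. Qed.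

Lemma lin_flatten (k : fieldType) (B : Type) (F : B -> k) (s : seq (fsum k B)) :
  lin F (flatten s) = \sum_(w <- s) lin F w.
Proof.
elim: s => [|w s IH]; first by rewrite /lin !big_nil.
by rewrite /= lin_cat IH big_cons.
Qed.

Lemma lin_lext (k : fieldType) (B C : Type) (F : C -> k) (f : B -> fsum k C)
  (v : fsum k B) : lin F (lext f v) = lin (fun b => lin F (f b)) v.
Proof.
rewrite /lext lin_flatten big_map /lin; apply: eq_bigr => x _.
rewrite big_map big_distrr /=; apply: eq_bigr => y _; by rewrite mulrA.
Qed.

Lemma eq_lin (k : fieldType) (B : Type) (F G : B -> k) (v : fsum k B) :
  (forall b, F b = G b) -> lin F v = lin G v.
Proof. by move=> FG; rewrite /lin; apply: eq_bigr => y _; rewrite FG. Qed.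

Lemma eq_lin_in (k : fieldType) (B : eqType) (P : pred (k * B)) (F G : B -> k) (v : fsum k B) :
  all P v -> (forall y, P y -> F y.2 = G y.2) -> lin F v = lin G v.
Proof.
move=> /allP Pv FG; rewrite /lin; apply: eq_big_seq => y yv.
by rewrite FG //; apply: Pv.
Qed.

Lemma coef_lin (k : fieldType) (B : eqType) (v : fsum k B) (b : B) :
  coef v b = lin (fun y => (y == b)%:R) v.
Proof.
rewrite /coef /lin big_mkcond; apply: eq_bigr => y _.
by case: eqP => _; rewrite ?mulr1 ?mulr0.
Qed.

Definition PF (k : fieldType) (N : nat) (q : 'I_N -> 'I_N -> k)
  (G : 'I_N -> 'I_N -> int) : k := \prod_(s : 'I_N) \prod_(t : 'I_N) q s t ^ G s t.
Definition PL (k : fieldType) (N : nat) (q : 'I_N -> 'I_N -> k)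
  (G : 'I_N -> 'I_N -> int) : k :=
  \prod_(s : 'I_N) \prod_(t : 'I_N | (t < s)%N) q s t ^ G s t.

Lemma PF_ext (k : fieldType) (N : nat) (q : 'I_N -> 'I_N -> k) G1 G2 :
  (forall s t, G1 s t = G2 s t) -> PF q G1 = PF q G2.
Proof. by move=> E; apply: eq_bigr => s _; apply: eq_bigr => t _; rewrite E. Qed.

Lemma PF_mul (k : fieldType) (N : nat) (q : 'I_N -> 'I_N -> k)
  (q_neq0 : forall i j, q i j != 0) G1 G2 :
  PF q G1 * PF q G2 = PF q (fun s t => G1 s t + G2 s t).
Proof.
rewrite /PF -big_split; apply: eq_bigr => s _; rewrite -big_split.
by apply: eq_bigr => t _ /=; rewrite expfzDr.
Qed.

Lemma PL_mul (k : fieldType) (N : nat) (q : 'I_N -> 'I_N -> k)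
  (q_neq0 : forall i j, q i j != 0) G1 G2 :
  PL q G1 * PL q G2 = PL q (fun s t => G1 s t + G2 s t).
Proof.
rewrite /PL -big_split; apply: eq_bigr => s _; rewrite -big_split.
by apply: eq_bigr => t _ /=; rewrite expfzDr.
Qed.

Lemma PL_eq (k : fieldType) (N : nat) (q : 'I_N -> 'I_N -> k) G1 G2 :
  (forall s t : 'I_N, (t < s)%N -> G1 s t = G2 s t) -> PL q G1 = PL q G2.
Proof.
move=> E; rewrite /PL; apply: eq_bigr => s _; apply: eq_bigr => t ts.
by rewrite E.
Qed.

Lemma PF_PL (k : fieldType) (N : nat) (q : 'I_N -> 'I_N -> k)
  (q_neq0 : forall i j, q i j != 0)
  (q_diag : forall i, q i i = 1)
  (q_inv : forall i j, q j i = (q i j)^-1) G :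
  PF q G = PL q (fun s t => G s t - G t s).
Proof.
have -> : PF q G = PL q G *
    \prod_(s : 'I_N) \prod_(t : 'I_N | ~~ (t < s)%N) q s t ^ G s t.
  rewrite /PF /PL -big_split; apply: eq_bigr => s _.
  by rewrite (bigID (fun t : 'I_N => (t < s)%N)).
have -> : \prod_(s : 'I_N) \prod_(t : 'I_N | ~~ (t < s)%N) q s t ^ G s t =
          \prod_(s : 'I_N) \prod_(t : 'I_N) (if (s < t)%N then q s t ^ G s t else 1).
  apply: eq_bigr => s _; rewrite big_mkcond; apply: eq_bigr => t _.
  case: (ltngtP t s) => ts //=.
  have -> : t = s by apply: val_inj.
  by rewrite q_diag exp1rz.
rewrite exchange_big /=.
have -> : \prod_(t : 'I_N) \prod_(s : 'I_N) (if (s < t)%N then q s t ^ G s t else 1)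
   = PL q (fun s t => - G t s).
  rewrite /PL; apply: eq_bigr => s _; rewrite [RHS]big_mkcond; apply: eq_bigr => t _.
  by case: ifP => // _; rewrite q_inv exprz_inv.
by rewrite PL_mul.
Qed.

Lemma PF_eq (k : fieldType) (N : nat) (q : 'I_N -> 'I_N -> k)
  (q_neq0 : forall i j, q i j != 0)
  (q_diag : forall i, q i i = 1)
  (q_inv : forall i j, q j i = (q i j)^-1) G1 G2 :
  (forall s t : 'I_N, (t < s)%N -> G1 s t - G1 t s = G2 s t - G2 t s) ->
  PF q G1 = PF q G2.
Proof. by move=> E; rewrite !PF_PL //; apply: PL_eq. Qed.

Lemma PF_prod2 (k : fieldType) (N : nat) (q : 'I_N -> 'I_N -> k)
  (P : pred 'I_N) (Q : 'I_N -> pred 'I_N) (n : 'I_N -> 'I_N -> nat) :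
  \prod_(s | P s) \prod_(t | Q s t) q s t ^+ n s t =
  PF q (fun s t => if P s && Q s t then (n s t)%:Z else 0).
Proof.
rewrite /PF big_mkcond; apply: eq_bigr => s _; case: (P s) => /=.
  by rewrite big_mkcond; apply: eq_bigr => t _; case: (Q s t).
by rewrite big1.
Qed.

Lemma PF_col (k : fieldType) (N : nat) (q : 'I_N -> 'I_N -> k)
  (P : pred 'I_N) (m : 'I_N) (n : 'I_N -> nat) :
  \prod_(s | P s) q s m ^+ n s =
  PF q (fun s t => if P s && (t == m) then (n s)%:Z else 0).
Proof.
rewrite /PF big_mkcond; apply: eq_bigr => s _.
rewrite (bigD1 m) //= eqxx andbT big1 ?mulr1; last first.
  by move=> t /negbTE ->; rewrite andbF.
by case: (P s).
Qed.

Lemma PF_row (k : fieldType) (N : nat) (q : 'I_N -> 'I_N -> k)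
  (Q : pred 'I_N) (m : 'I_N) (n : 'I_N -> nat) :
  \prod_(t | Q t) q m t ^+ n t =
  PF q (fun s t => if (s == m) && Q t then (n t)%:Z else 0).
Proof.
rewrite /PF [RHS](bigD1 m) //= [X in _ * X]big1 ?mulr1; last first.
  by move=> s /negbTE sm; apply: big1 => t _; rewrite sm.
rewrite big_mkcond; apply: eq_bigr => t _; rewrite eqxx /=.
by case: (Q t).
Qed.

Lemma PF_exp (k : fieldType) (N : nat) (q : 'I_N -> 'I_N -> k)
  (q_neq0 : forall i j, q i j != 0) G (n : nat) :
  PF q G ^+ n = PF q (fun s t => G s t * n%:Z).
Proof.
elim: n => [|n IH].
  by rewrite expr0 /PF; symmetry; apply: big1 => s _; apply: big1 => t _; rewrite mulr0.
rewrite exprS IH PF_mul //; apply: PF_ext => s t.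
by rewrite -addn1 PoszD mulrDr mulr1 addrC.
Qed.

Lemma mcoefE (k : fieldType) (N : nat) (q : 'I_N -> 'I_N -> k) (a b : mono N) :
  mcoef q a b = PF q (fun s t => if (t < s)%N then (a s * b t)%N%:Z else 0).
Proof. by rewrite /mcoef (PF_prod2 q predT). Qed.

Lemma PF_neq0 (k : fieldType) (N : nat) (q : 'I_N -> 'I_N -> k)
  (q_neq0 : forall i j, q i j != 0) G : PF q G != 0.
Proof.
by apply/prodf_neq0 => s _; apply/prodf_neq0 => t _; apply: expfz_neq0.
Qed.


Lemma PF_col1 (k : fieldType) (N : nat) (q : 'I_N -> 'I_N -> k)
  (P : pred 'I_N) (m : 'I_N) :
  \prod_(s | P s) q s m = PF q (fun s t => if P s && (t == m) then 1 else 0).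
Proof.
rewrite -(PF_col q P m (fun _ => 1%N)); apply: eq_bigr => s _; by rewrite expr1.
Qed.

Lemma PF_row1 (k : fieldType) (N : nat) (q : 'I_N -> 'I_N -> k)
  (Q : pred 'I_N) (m : 'I_N) :
  \prod_(t | Q t) q m t = PF q (fun s t => if (s == m) && Q t then 1 else 0).
Proof.
rewrite -(PF_row q Q m (fun _ => 1%N)); apply: eq_bigr => s _; by rewrite expr1.
Qed.

Definition eJ (N : nat) (J : {set 'I_N}) : mono N := [ffun i => ((i \in J) : nat)].

Definition psi (k : fieldType) (N : nat) (q : 'I_N -> 'I_N -> k) (x : kbasis N) : k :=
  let: (a, J, b) := x in mcoef q a (eJ J) * mcoef q a b * mcoef q (eJ J) b.

Lemma psi_neq0 (k : fieldType) (N : nat) (q : 'I_N -> 'I_N -> k)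
  (q_neq0 : forall i j, q i j != 0) x : psi q x != 0.
Proof.
case: x => [[a J] b] /=; rewrite !mcoefE !mulf_neq0 //; exact: PF_neq0.
Qed.

Lemma ordneq_lem (N : nat) (x y : 'I_N) : x != y -> nat_of_ord x <> nat_of_ord y.
Proof. by move=> /eqP xy e; apply: xy; apply: val_inj. Qed.

Ltac ordneq h := let h' := fresh "hne" in have h' := ordneq_lem h.

Ltac solve_exp :=
  repeat match goal with |- context [?x \in ?A] => case: (x \in A) end;
  rewrite /= ?andbT ?andbF ?andTb ?andFb ?orbT ?orbF ?orTb ?orFb;
  repeat (case: ifP => ?); lia.

Lemma psi_d1 (k : fieldType) (N : nat) (q : 'I_N -> 'I_N -> k)
  (q_neq0 : forall i j, q i j != 0)
  (q_diag : forall i, q i i = 1)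
  (q_inv : forall i j, q j i = (q i j)^-1) (a b : mono N) (J : {set 'I_N}) (j : 'I_N) :
  j \in J ->
  (\prod_(s in J | (s <= j)%N) q s j) * mcoef q a (monoX j) *
     psi q (monoadd a (monoX j), J :\ j, b) = psi q (a, J, b).
Proof.
move=> jJ; rewrite /psi !mcoefE PF_col1 !PF_mul //; apply: PF_eq => // s t ts.
have st : (s < t)%N = false by apply/negbTE; rewrite -leqNgt ltnW.
rewrite ts st !ffunE !inE /=.
case: (eqVneq s j) => [?|sj]; [subst s|ordneq sj];
case: (eqVneq t j) => [?|tj]; try subst t; try ordneq tj;
  rewrite ?eqxx ?jJ /=; try (by move: ts; rewrite ltnn);
  solve_exp.
Qed.

Lemma psi_d2 (k : fieldType) (N : nat) (q : 'I_N -> 'I_N -> k)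
  (q_neq0 : forall i j, q i j != 0)
  (q_diag : forall i, q i i = 1)
  (q_inv : forall i j, q j i = (q i j)^-1) (a b : mono N) (J : {set 'I_N}) (j : 'I_N) :
  j \in J ->
  (\prod_(s in J | (j <= s)%N) q j s) * mcoef q (monoX j) b *
     psi q (a, J :\ j, monoadd (monoX j) b) = psi q (a, J, b).
Proof.
move=> jJ; rewrite /psi !mcoefE PF_row1 !PF_mul //; apply: PF_eq => // s t ts.
have st : (s < t)%N = false by apply/negbTE; rewrite -leqNgt ltnW.
rewrite ts st !ffunE !inE /=.
case: (eqVneq s j) => [?|sj]; [subst s|ordneq sj];
case: (eqVneq t j) => [?|tj]; try subst t; try ordneq tj;
  rewrite ?eqxx ?jJ /=; try (by move: ts; rewrite ltnn);
  solve_exp.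
Qed.

Definition Lmono (N : nat) (l : mono N) (m : 'I_N) (r : nat) : mono N :=
  [ffun t : 'I_N => if (t < m)%N then 0%N else if t == m then (l m - r)%N else l t].
Definition Rmono (N : nat) (l : mono N) (m : 'I_N) (r : nat) : mono N :=
  [ffun t : 'I_N => if (t < m)%N then l t else if t == m then r.-1 else 0%N].

Lemma psi_t (k : fieldType) (N : nat) (q : 'I_N -> 'I_N -> k)
  (q_neq0 : forall i j, q i j != 0)
  (q_diag : forall i, q i i = 1)
  (q_inv : forall i j, q j i = (q i j)^-1) (a l : mono N) (J : {set 'I_N}) (m : 'I_N)
  (r : nat) :
  (forall j, j \in J -> (j < m)%N) -> (1 <= r <= l m)%N ->
  lambda q l J m r * mcoef q a (Lmono l m r) *
     psi q (monoadd a (Lmono l m r), m |: J, Rmono l m r) = psi q (a, J, l).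
Proof.
move=> Jm /andP [r1 rl].
rewrite /lambda /psi !mcoefE.
rewrite (PF_prod2 q (fun s => (s < m)%N) (fun s t => (m <= t)%N)).
rewrite (PF_row q predT m) PF_exp //.
rewrite (PF_col q (fun j => j \in J) m).
rewrite (PF_prod2 q (fun j => j \in m |: J) (fun s t => (m < t)%N)).
rewrite !PF_mul //; apply: PF_eq => // s t ts.
have st : (s < t)%N = false by apply/negbTE; rewrite -leqNgt ltnW.
rewrite ts st !ffunE !inE /=.
have mJ : m \notin J by apply/negP => /Jm; rewrite ltnn.
have [x ex] : exists x, l m = (x + r)%N by exists (l m - r)%N; rewrite subnK.
have [y ey] : exists y, r = y.+1 by exists r.-1; rewrite prednK.
case: (eqVneq s m) => [?|sm]; [subst s|ordneq sm];
case: (eqVneq t m) => [?|tm]; try subst t; try ordneq tm;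
  rewrite ?eqxx ?(negbTE mJ) ?ex ?ey ?addnK /= ?ltnn ?leqnn /=; try (by move: ts; rewrite ltnn).
all: try (case sJ: (s \in J); [move: (Jm _ sJ) => ?|]).
all: try (case tJ: (t \in J); [move: (Jm _ tJ) => ?|]).
all: rewrite /= ?andbT ?andbF ?andTb ?andFb ?orbT ?orbF ?orTb ?orFb.
all: repeat (case: ifP => ?; rewrite ?andFb ?andbF /=).
all: lia.
Qed.


Definition DC (k : fieldType) (N : nat) (H : kbasis N -> k) (x : kbasis N) : k :=
  let: (a, J, b) := x in
  \sum_(j in J) (-1) ^+ #|[set s in J | (s < j)%N]| *
     (H (monoadd a (monoX j), J :\ j, b) - H (a, J :\ j, monoadd (monoX j) b)).

Definition TC (k : fieldType) (N : nat) (H : kbasis N -> k) (x : kbasis N) : k :=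
  let: (a, J, l) := x in
  (-1) ^+ #|J|.+1 * \sum_(m : 'I_N | [forall j in J, (j < m)%N])
     \sum_(r <- iota 1 (l m)) H (monoadd a (Lmono l m r), m |: J, Rmono l m r).

Lemma big_ord_enum_sum (k : fieldType) (N : nat) (P : pred 'I_N) (F : 'I_N -> k) :
  \sum_(i <- ord_enum N | P i) F i = \sum_(i | P i) F i.
Proof.
apply: perm_big; apply: uniq_perm (ord_enum_uniq N) (index_enum_uniq _) _ => i.
by rewrite mem_ord_enum mem_index_enum.
Qed.

Lemma lin_dK (k : fieldType) (N : nat) (q : 'I_N -> 'I_N -> k)
  (q_neq0 : forall i j, q i j != 0)
  (q_diag : forall i, q i i = 1)
  (q_inv : forall i j, q j i = (q i j)^-1) (H : kbasis N -> k) (x : kbasis N) :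
  lin (fun y => psi q y * H y) (dK q x) = psi q x * DC H x.
Proof.
case: x => [[a J] b]; rewrite /dK /DC lin_flatten big_map /wlist big_filter.
rewrite big_ord_enum_sum mulr_sumr; apply: eq_bigr => j jJ.
rewrite /lin !big_cons big_nil /=.
have E1 := psi_d1 q_neq0 q_diag q_inv a b jJ.
have E2 := psi_d2 q_neq0 q_diag q_inv a b jJ.
set sg := (-1) ^+ _.
set L := \prod_(s in J | _) _ in E1 *.
set R := \prod_(s in J | _) _ in E2 *.
set H1 := H (monoadd a (monoX j), J :\ j, b).
set H2 := H (a, J :\ j, monoadd (monoX j) b).
have -> : psi q (a, J, b) * (sg * (H1 - H2)) = psi q (a, J, b) * sg * H1 - psi q (a, J, b) * sg * H2 by ring.
rewrite /psi /= in E1 E2 *; rewrite -{1}E1 -E2; ring.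
Qed.

Lemma lin_tK (k : fieldType) (N : nat) (q : 'I_N -> 'I_N -> k)
  (q_neq0 : forall i j, q i j != 0)
  (q_diag : forall i, q i i = 1)
  (q_inv : forall i j, q j i = (q i j)^-1) (H : kbasis N -> k) (x : kbasis N) :
  lin (fun y => psi q y * H y) (tK q x) = psi q x * TC H x.
Proof.
case: x => [[a J] l]; rewrite /tK /TC lin_flatten big_map big_filter.
rewrite big_ord_enum_sum mulrCA mulr_sumr mulr_sumr; apply: eq_bigr => m Jm.
rewrite /lin big_map mulr_sumr mulr_sumr; apply: eq_big_seq => r.
rewrite mem_iota => rl /=.
have Jm' : forall j, j \in J -> (j < m)%N by move=> j jJ; move/forall_inP: Jm; apply.
have rl' : (1 <= r <= l m)%N by rewrite add1n ltnS in rl.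
have E := psi_t q_neq0 q_diag q_inv a Jm' rl'.
rewrite /Lmono /Rmono in E.
rewrite /psi /Lmono /Rmono /= in E *; rewrite -E; ring.
Qed.


Definition Dl (k : fieldType) (N : nat) (H : kbasis N -> k) (j : 'I_N) (K : {set 'I_N})
  (a b : mono N) : k :=
  H (monoadd a (monoX j), K, b) - H (a, K, monoadd (monoX j) b).
Definition sgnJ (k : fieldType) (N : nat) (J : {set 'I_N}) (j : 'I_N) : k :=
  (-1) ^+ #|[set s in J | (s < j)%N]|.
Definition SS (k : fieldType) (N : nat) (H : kbasis N -> k) (a : mono N)
  (J : {set 'I_N}) (l : mono N) : k :=
  \sum_(j in J) sgnJ k J j * \sum_(m : 'I_N | [forall i in J, (i < m)%N])
     \sum_(r <- iota 1 (l m)) Dl H j (m |: (J :\ j)) (monoadd a (Lmono l m r)) (Rmono l m r).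
Definition Pspl (N : nat) (a l : mono N) (J : {set 'I_N}) (n : nat) : kbasis N :=
  (monoadd a [ffun t : 'I_N => if (n <= t)%N then l t else 0%N], J,
   [ffun t : 'I_N => if (t < n)%N then l t else 0%N]).
Definition n0 (N : nat) (J : {set 'I_N}) : nat := \max_(j in J) (nat_of_ord j).+1.

Ltac ffeq :=
  let t := fresh "t" in
  apply/ffunP => t; rewrite !ffunE /=;
  repeat match goal with
  | |- context [?x == ?y] =>
      let e := fresh "e" in
      case: (eqVneq x y) => e; [subst x; rewrite ?eqxx | ordneq e; rewrite ?(negbTE e)]
  end; repeat (case: ifP => ?; rewrite /=); lia.

Lemma sign_aux1 (k : fieldType) c : (-1) ^+ c * (-1) ^+ c.+2 = 1 :> k.
Proof. by rewrite -exprD -signr_odd addnS addnS /= negbK addnn odd_double. Qed.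
Lemma sign_aux2 (k : fieldType) c : (-1) ^+ c.+1 * (-1) ^+ c = -1 :> k.
Proof. by rewrite exprS mulN1r mulNr -expr2 sqrr_sign. Qed.

Lemma tele_iota (k : fieldType) (g : nat -> k) (n : nat) :
  \sum_(r <- iota 1 n) (g r.-1 - g r) = g 0%N - g n.
Proof.
elim: n => [|n IH]; first by rewrite big_nil subrr.
rewrite -[n.+1]addn1 iotaD big_cat /= big_seq1 IH add1n /= addn1; ring.
Qed.

Lemma gt_n0 (N : nat) (J : {set 'I_N}) (m : 'I_N) :
  [forall i in J, (i < m)%N] = (n0 J <= m)%N.
Proof.
apply/forall_inP/bigmax_leqP => h i iJ; exact: h.
Qed.

Lemma n0_le (N : nat) (J : {set 'I_N}) : (n0 J <= N)%N.
Proof. by apply/bigmax_leqP => i _; exact: ltn_ord. Qed.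

Lemma tele_r (k : fieldType) (N : nat) (H : kbasis N -> k) (a l : mono N)
  (J : {set 'I_N}) (m : 'I_N) :
  \sum_(r <- iota 1 (l m)) Dl H m J (monoadd a (Lmono l m r)) (Rmono l m r) =
  H (Pspl a l J m) - H (Pspl a l J m.+1).
Proof.
pose u r := H (monoadd a (Lmono l m r), J, Rmono l m r.+1).
have -> : H (Pspl a l J m) = u 0%N.
  rewrite /u /Pspl; congr (H (_, _, _)); rewrite /Lmono /Rmono /monoadd; ffeq.
have -> : H (Pspl a l J m.+1) = u (l m).
  rewrite /u /Pspl; congr (H (_, _, _)); rewrite /Lmono /Rmono /monoadd; ffeq.
rewrite -tele_iota; apply: eq_big_seq => r; rewrite mem_iota => /andP [r1 rl].
rewrite /Dl /u; congr (H (_, _, _) - H (_, _, _));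
  rewrite /Lmono /Rmono /monoadd /monoX; ffeq.
Qed.

Lemma DC_U1 (k : fieldType) (N : nat) (H : kbasis N -> k) (a b : mono N)
  (J : {set 'I_N}) (m : 'I_N) :
  (forall i, i \in J -> (i < m)%N) ->
  DC H (a, m |: J, b) = (-1) ^+ #|J| * Dl H m J a b +
    \sum_(j in J) sgnJ k J j * Dl H j (m |: (J :\ j)) a b.
Proof.
move=> Jm; have mJ : m \notin J by apply/negP => /Jm; rewrite ltnn.
rewrite /DC big_setU1 //=; congr (_ + _).
  have -> : [set s in m |: J | (s < m)%N] = J.
    apply/setP => s; rewrite !inE; case: (eqVneq s m) => [->|sm] /=.
      by rewrite ltnn (negbTE mJ).
    by case sJ: (s \in J) => //=; rewrite Jm.
  by rewrite setU1K.
apply: eq_bigr => j jJ.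
have jm := Jm _ jJ.
have -> : [set s in m |: J | (s < j)%N] = [set s in J | (s < j)%N].
  apply/setP => s; rewrite !inE; case: (eqVneq s m) => [->|sm] //=.
  by rewrite (negbTE mJ) ltnNge ltnW.
have -> : (m |: J) :\ j = m |: (J :\ j).
  apply/setP => s; rewrite !inE; case: (eqVneq s m) => [->|sm] //=.
  by rewrite andbT; apply/eqP => e; move: jm; rewrite -e ltnn.
by [].
Qed.

Lemma TCDC (k : fieldType) (N : nat) (H : kbasis N -> k) (a l : mono N)
  (J : {set 'I_N}) :
  TC (DC H) (a, J, l) = H (Pspl a l J N) - H (Pspl a l J (n0 J)) +
    (-1) ^+ #|J|.+1 * SS H a J l.
Proof.
have E : forall m : 'I_N, [forall i in J, (i < m)%N] ->
  \sum_(r <- iota 1 (l m)) DC H (monoadd a (Lmono l m r), m |: J, Rmono l m r) =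
  (-1) ^+ #|J| * (H (Pspl a l J m) - H (Pspl a l J m.+1)) +
  \sum_(j in J) sgnJ k J j * \sum_(r <- iota 1 (l m))
      Dl H j (m |: (J :\ j)) (monoadd a (Lmono l m r)) (Rmono l m r).
  move=> m /forall_inP Jm.
  rewrite -tele_r mulr_sumr.
  under eq_bigr do rewrite DC_U1 //.
  rewrite big_split /=; congr (_ + _).
  rewrite exchange_big /=; apply: eq_bigr => j _; by rewrite mulr_sumr.
rewrite /TC (eq_bigr _ E) big_split /=.
rewrite /SS.
have -> : \sum_(i : 'I_N | [forall i0 in J, (i0 < i)%N])
    \sum_(j in J) sgnJ k J j * \sum_(r <- iota 1 (l i))
      Dl H j (i |: (J :\ j)) (monoadd a (Lmono l i r)) (Rmono l i r) =
  \sum_(j in J) sgnJ k J j * \sum_(m : 'I_N | [forall i in J, (i < m)%N])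
     \sum_(r <- iota 1 (l m)) Dl H j (m |: (J :\ j)) (monoadd a (Lmono l m r)) (Rmono l m r).
  rewrite exchange_big /=; apply: eq_bigr => j _; by rewrite mulr_sumr.
rewrite -mulr_sumr.
have -> : \sum_(i : 'I_N | [forall i0 in J, (i0 < i)%N]) (H (Pspl a l J i) - H (Pspl a l J i.+1))
   = H (Pspl a l J (n0 J)) - H (Pspl a l J N).
  rewrite (eq_bigl (fun i : 'I_N => (n0 J <= i)%N)); last by move=> i; rewrite gt_n0.
  rewrite -(big_geq_mkord (n0 J) N xpredT (fun i => H (Pspl a l J i) - H (Pspl a l J i.+1))) /=.
  rewrite -[LHS]opprK -sumrN.
  under eq_bigr do rewrite opprB.
  by rewrite telescope_sumr ?n0_le // opprB.
rewrite mulrDr mulrA sign_aux2; ring.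
Qed.

Lemma gtD1 (N : nat) (J : {set 'I_N}) (j m : 'I_N) : j \in J ->
  [forall i in J, (i < m)%N] = [forall i in J :\ j, (i < m)%N] && (j < m)%N.
Proof.
move=> jJ; apply/idP/idP.
  move/forall_inP => h; apply/andP; split; last exact: h.
  by apply/forall_inP => i; rewrite inE => /andP [_ iJ]; exact: h.
case/andP => /forall_inP h jm; apply/forall_inP => i iJ.
case: (eqVneq i j) => [->//|ij]; apply: h; by rewrite in_setD1 ij iJ.
Qed.

Lemma perj (k : fieldType) (N : nat) (H : kbasis N -> k) (a l : mono N)
  (J : {set 'I_N}) (j : 'I_N) : j \in J ->
  TC H (monoadd a (monoX j), J :\ j, l) - TC H (a, J :\ j, monoadd (monoX j) l) =
  (-1) ^+ #|J|.+1 * (- \sum_(m : 'I_N | [forall i in J, (i < m)%N])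
       \sum_(r <- iota 1 (l m)) Dl H j (m |: (J :\ j)) (monoadd a (Lmono l m r)) (Rmono l m r)
     + (if [forall i in J :\ j, (i < j)%N] then H (Pspl a l J j.+1) else 0)).
Proof.
move=> jJ.
have cJ : #|J| = #|J :\ j|.+1 by rewrite (cardsD1 j J) jJ.
rewrite /TC cJ -mulrBr.
set K := J :\ j.
have claim : forall m : 'I_N,
  \sum_(r <- iota 1 (l m)) H (monoadd (monoadd a (monoX j)) (Lmono l m r), m |: K, Rmono l m r)
  - \sum_(r <- iota 1 ((monoadd (monoX j) l) m))
       H (monoadd a (Lmono (monoadd (monoX j) l) m r), m |: K, Rmono (monoadd (monoX j) l) m r)
  = (if (j < m)%N then \sum_(r <- iota 1 (l m)) Dl H j (m |: K) (monoadd a (Lmono l m r)) (Rmono l m r) else 0)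
    + (if m == j then - H (Pspl a l J j.+1) else 0).
  move=> m; case: (ltngtP m j) => h.
  - have mj : m != j by apply/eqP => e; move: h; rewrite e ltnn.
    rewrite (negbTE mj) addr0.
    have -> : (monoadd (monoX j) l) m = l m by rewrite !ffunE (negbTE mj).
    rewrite -sumrB big1_seq // => r; rewrite mem_iota => /andP [r1 rl].
    apply/eqP; rewrite subr_eq0; apply/eqP.
    congr (H (_, _, _)); rewrite /Lmono /Rmono /monoadd /monoX; ffeq.
  - have mj : m != j by apply/eqP => e; move: h; rewrite e ltnn.
    rewrite (negbTE mj) addr0.
    have -> : (monoadd (monoX j) l) m = l m by rewrite !ffunE (negbTE mj).
    rewrite -sumrB; apply: eq_big_seq => r; rewrite mem_iota => /andP [r1 rl].
    rewrite /Dl; congr (H (_, _, _) - H (_, _, _)); rewrite /Lmono /Rmono /monoadd /monoX; ffeq.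
  - have e : m = j by apply: val_inj.
    subst m; rewrite eqxx add0r.
    have -> : (monoadd (monoX j) l) j = ((l j) + 1)%N by rewrite !ffunE eqxx addnC.
    rewrite iotaD big_cat big_seq1 /= opprD addrA.
    have -> : \sum_(r <- iota 1 (l j)) H (monoadd (monoadd a (monoX j)) (Lmono l j r), j |: K, Rmono l j r)
      = \sum_(r <- iota 1 (l j))
       H (monoadd a (Lmono (monoadd (monoX j) l) j r), j |: K, Rmono (monoadd (monoX j) l) j r).
      apply: eq_big_seq => r; rewrite mem_iota => /andP [r1 rl].
      congr (H (_, _, _)); rewrite /Lmono /Rmono /monoadd /monoX; ffeq.
    rewrite subrr add0r; congr (- H _).
    rewrite /Pspl /K setD1K //; congr (_, _, _); rewrite /Lmono /Rmono /monoadd /monoX; ffeq.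
rewrite -sumrB (eq_bigr _ (fun m _ => claim m)) big_split /=.
have -> : \sum_(i : 'I_N | [forall i0 in K, (i0 < i)%N])
   (if (j < i)%N then \sum_(r <- iota 1 (l i)) Dl H j (i |: K) (monoadd a (Lmono l i r)) (Rmono l i r) else 0)
  = \sum_(m : 'I_N | [forall i in J, (i < m)%N])
       \sum_(r <- iota 1 (l m)) Dl H j (m |: K) (monoadd a (Lmono l m r)) (Rmono l m r).
  rewrite big_mkcond [RHS]big_mkcond; apply: eq_bigr => m _.
  rewrite (gtD1 _ jJ); by case: ([forall i in K, (i < m)%N]); case: (j < m)%N.
have -> : \sum_(i : 'I_N | [forall i0 in K, (i0 < i)%N]) (if i == j then - H (Pspl a l J j.+1) else 0)
   = if [forall i in K, (i < j)%N] then - H (Pspl a l J j.+1) else 0.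
  rewrite big_mkcond (bigD1 j) //= eqxx big1 ?addr0 //.
  by move=> i /negbTE ->; case: ifP.
rewrite [(-1) ^+ #|K|.+2]exprS.
by case: ifP => _; ring.
Qed.

Lemma DCTC (k : fieldType) (N : nat) (H : kbasis N -> k) (a l : mono N)
  (J : {set 'I_N}) : J != set0 ->
  DC (TC H) (a, J, l) = - ((-1) ^+ #|J|.+1 * SS H a J l) + H (Pspl a l J (n0 J)).
Proof.
move=> J0.
rewrite /DC.
under eq_bigr => j jJ do rewrite perj //.
rewrite /SS.
have -> : forall (F G : 'I_N -> k),
   \sum_(j in J) (-1) ^+ #|[set s in J | (s < j)%N]| * ((-1) ^+ #|J|.+1 * (- F j + G j))
   = - ((-1) ^+ #|J|.+1 * \sum_(j in J) sgnJ k J j * F j)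
     + \sum_(j in J) sgnJ k J j * (-1) ^+ #|J|.+1 * G j.
  move=> F G; rewrite mulr_sumr -sumrN -big_split; apply: eq_bigr => j _.
  rewrite /sgnJ /=; ring.
apply: (congr1 (fun x => _ + x)).
have [j0 j0J ej0] : {i0 : 'I_N | i0 \in J & n0 J = (nat_of_ord i0).+1}.
  apply: eq_bigmax_cond; by rewrite card_gt0.
have lt0 : forall i, i \in J -> i != j0 -> (i < j0)%N.
  move=> i iJ ij; have : (i.+1 <= n0 J)%N by rewrite /n0; apply: leq_bigmax_cond.
  rewrite ej0 ltnS leq_eqVlt => /orP [/eqP e|//].
  by move/eqP: ij; case; apply: val_inj.
rewrite (bigD1 j0) //= big1 ?addr0; last first.
  move=> i /andP [iJ ij0].
  have -> : [forall i0 in J :\ i, (i0 < i)%N] = false.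
    apply/negbTE/negP => /forall_inP h.
    have : j0 \in J :\ i by rewrite in_setD1 j0J eq_sym ij0.
    move/h => /ltnW; rewrite leqNgt lt0 //.
  by rewrite mulr0.
have -> : [forall i0 in J :\ j0, (i0 < j0)%N] = true.
  apply/forall_inP => i; rewrite in_setD1 => /andP [ij iJ]; exact: lt0.
rewrite /sgnJ ej0.
have -> : [set s in J | (s < j0)%N] = J :\ j0.
  apply/setP => s; rewrite !inE; case: (eqVneq s j0) => [->|sj] /=; first by rewrite ltnn andbF.
  by case sJ: (s \in J) => //=; rewrite lt0.
by rewrite (cardsD1 j0 J) j0J add1n sign_aux1 mul1r.
Qed.

Lemma comm_id (k : fieldType) (N : nat) (H : kbasis N -> k) (a l : mono N)
  (J : {set 'I_N}) : J != set0 ->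
  TC (DC H) (a, J, l) + DC (TC H) (a, J, l) = H (a, J, l).
Proof.
move=> J0; rewrite TCDC DCTC //.
have -> : Pspl a l J N = (a, J, l).
  rewrite /Pspl; congr (_, _, _); apply/ffunP => t; rewrite !ffunE.
    by rewrite leqNgt ltn_ord addn0.
  by rewrite ltn_ord.
ring.
Qed.

Lemma comm_id0 (k : fieldType) (N : nat) (H : kbasis N -> k) (a l : mono N) :
  TC (DC H) (a, set0, l) + H (monoadd a l, set0, mono0 N) = H (a, set0, l).
Proof.
rewrite TCDC.
have -> : Pspl a l set0 N = (a, set0, l).
  rewrite /Pspl; congr (_, _, _); apply/ffunP => t; rewrite !ffunE.
    by rewrite leqNgt ltn_ord addn0.
  by rewrite ltn_ord.
have -> : n0 (set0 : {set 'I_N}) = 0%N by rewrite /n0 big_pred0 // => i; rewrite inE.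
have -> : Pspl a l set0 0 = (monoadd a l, set0, mono0 N).
  rewrite /Pspl; congr (_, _, _); apply/ffunP => t; rewrite !ffunE //.
have -> : SS H a set0 l = 0 by rewrite /SS big_pred0 // => i; rewrite inE.
ring.
Qed.


Lemma lin_add (k : fieldType) (B : Type) (F G : B -> k) (v : fsum k B) :
  lin F v + lin G v = lin (fun b => F b + G b) v.
Proof. by rewrite /lin -big_split; apply: eq_bigr => y _; rewrite mulrDr. Qed.

Lemma lin1 (k : fieldType) (B : Type) (F : B -> k) c y : lin F [:: (c, y)] = c * F y.
Proof. by rewrite /lin big_seq1. Qed.

Lemma mcoef_0r (k : fieldType) (N : nat) (q : 'I_N -> 'I_N -> k) (a b : mono N) :
  (forall t, b t = 0%N) -> mcoef q a b = 1.
Proof.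
move=> b0; rewrite /mcoef; apply: big1 => s _; apply: big1 => t _; by rewrite b0 muln0 expr0.
Qed.

Lemma mcoef_0l (k : fieldType) (N : nat) (q : 'I_N -> 'I_N -> k) (a b : mono N) :
  (forall t, a t = 0%N) -> mcoef q a b = 1.
Proof.
move=> a0; rewrite /mcoef; apply: big1 => s _; apply: big1 => t _; by rewrite a0 mul0n expr0.
Qed.

Lemma eJ0 (N : nat) t : eJ (set0 : {set 'I_N}) t = 0%N.
Proof. by rewrite ffunE inE. Qed.

Lemma psiH (k : fieldType) (N : nat) (q : 'I_N -> 'I_N -> k)
  (q_neq0 : forall i j, q i j != 0) (F : kbasis N -> k) y :
  F y = psi q y * (F y / psi q y).
Proof. by rewrite mulrC divfK // psi_neq0. Qed.

Lemma lin_lext2 (k : fieldType) (B C D : Type) (F : D -> k) (f : C -> fsum k D)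
  (g : B -> fsum k C) (v : fsum k B) :
  lin F (lext f (lext g v)) = lin (fun x => lin F (lext f (g x))) v.
Proof. by rewrite !lin_lext; apply: eq_lin => x; rewrite lin_lext. Qed.

Lemma eq_lin_in2 (k : fieldType) (B : eqType) (P : pred (k * B)) (F G : B -> k) (v : fsum k B) :
  all P v -> (forall c x, P (c, x) -> F x = G x) -> lin F v = lin G v.
Proof. by move=> hv h; apply: (eq_lin_in hv) => -[c x] /h. Qed.

Lemma elem0 (k : fieldType) (N : nat) (q : 'I_N -> 'I_N -> k)
  (q_neq0 : forall i j, q i j != 0)
  (q_diag : forall i, q i i = 1)
  (q_inv : forall i j, q j i = (q i j)^-1) (a l : mono N) (b : kbasis N) :
  lin (fun y => (y == b)%:R) (lext (@tm1 k N) (d0 q (a, set0, l))) +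
  lin (fun y => (y == b)%:R) (lext (dK q) (tK q (a, set0, l))) =
  ((a, set0, l) == b)%:R.
Proof.
pose H := fun y : kbasis N => (y == b)%:R / psi q y.
have eF : forall w : fsum k (kbasis N),
    lin (fun y => (y == b)%:R) w = lin (fun y => psi q y * H y) w.
  by move=> w; apply: eq_lin => y; rewrite /H mulrC divfK // psi_neq0.
have E1 : lin (fun y => psi q y * H y) (lext (@tm1 k N) (d0 q (a, set0, l))) =
          psi q (a, set0, l) * H (monoadd a l, set0, mono0 N).
  rewrite lin_lext /d0 lin1 /tm1 lin1 mul1r.
  have p1 : psi q (monoadd a l, set0, mono0 N) = 1.
    by rewrite /psi !mcoef_0r ?mulr1 // => t; rewrite ffunE ?inE.
  have p2 : psi q (a, set0, l) = mcoef q a l.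
    have m1 : mcoef q a (eJ set0) = 1 by apply: mcoef_0r => t; exact: eJ0.
    have m2 : mcoef q (eJ set0) l = 1 by apply: mcoef_0l => t; exact: eJ0.
    by rewrite /psi m1 m2 mul1r mulr1.
  by rewrite p1 p2 !mul1r.
rewrite !eF E1 lin_lext.
rewrite (eq_lin _ (fun y => lin_dK q_neq0 q_diag q_inv H y)) lin_tK //.
by rewrite -mulrDr addrC comm_id0 /H mulrC divfK // psi_neq0.
Qed.

Lemma elemp (k : fieldType) (N : nat) (q : 'I_N -> 'I_N -> k)
  (q_neq0 : forall i j, q i j != 0)
  (q_diag : forall i, q i i = 1)
  (q_inv : forall i j, q j i = (q i j)^-1) (x : kbasis N) (b : kbasis N) :
  x.1.2 != set0 ->
  lin (fun y => (y == b)%:R) (lext (tK q) (dK q x)) +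
  lin (fun y => (y == b)%:R) (lext (dK q) (tK q x)) =
  (x == b)%:R.
Proof.
move=> J0.
pose H := fun y : kbasis N => (y == b)%:R / psi q y.
have eF : forall w : fsum k (kbasis N),
    lin (fun y => (y == b)%:R) w = lin (fun y => psi q y * H y) w.
  by move=> w; apply: eq_lin => y; rewrite /H mulrC divfK // psi_neq0.
rewrite !eF !lin_lext.
rewrite (eq_lin _ (fun y => lin_dK q_neq0 q_diag q_inv H y)) lin_tK //.
rewrite (eq_lin _ (fun y => lin_tK q_neq0 q_diag q_inv H y)) lin_dK //.
rewrite -mulrDr addrC.
have -> : TC (DC H) x + DC (TC H) x = H x by case: x J0 => [[a J] l] J0; apply: comm_id.
by rewrite /H mulrC divfK // psi_neq0.
Qed.

Theorem mainTheorem3 (k : fieldType) (N : nat) (q : 'I_N -> 'I_N -> k)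
  (q_neq0 : forall i j, q i j != 0)
  (q_diag : forall i, q i i = 1)
  (q_inv : forall i j, q j i = (q i j)^-1) :
  (* d_0 t_{-1} = Id_A *)
  (forall (v : fsum k (mono N)) (b : mono N),
     coef (lext (d0 q) (lext (@tm1 k N) v)) b = coef v b)
  /\
  (* t_{-1} d_0 + d_1 t_0 = Id_{K_0} *)
  (forall (v : fsum k (kbasis N)), all (fun x : k * kbasis N => #|x.2.1.2| == 0%N) v ->
     forall b : kbasis N,
     coef (lext (@tm1 k N) (lext (d0 q) v) ++ lext (dK q) (lext (tK q) v)) b
     = coef v b)
  /\
  (* t_{p-1} d_p + d_{p+1} t_p = Id_{K_p} for p >= 1 *)
  (forall (p : nat), (1 <= p)%N ->
   forall (v : fsum k (kbasis N)), all (fun x : k * kbasis N => #|x.2.1.2| == p) v ->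
     forall b : kbasis N,
     coef (lext (tK q) (lext (dK q) v) ++ lext (dK q) (lext (tK q) v)) b
     = coef v b).
Proof.
split; [|split].
- move=> v b; rewrite !coef_lin !lin_lext; apply: eq_lin => a.
  rewrite /tm1 lin1 /d0 lin1 mul1r mcoef_0r => [|t]; last by rewrite ffunE.
  have -> : monoadd a (mono0 N) = a by apply/ffunP => t; rewrite !ffunE addn0.
  by rewrite mul1r.
- move=> v hv b; rewrite !coef_lin lin_cat !lin_lext2 lin_add.
  apply: (eq_lin_in2 hv) => c [[a J] l] hJ.
  have {hJ} /eqP/cards0_eq hJ : #|J| == 0%N := hJ.
  subst J; exact: elem0.
- move=> p p1 v hv b; rewrite !coef_lin lin_cat !lin_lext2 lin_add.
  apply: (eq_lin_in2 hv) => c x hx.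
  apply: elemp => //.
  have {hx} /eqP hx : #|x.1.2| == p := hx.
  by rewrite -card_gt0 hx.
Qed.
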